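(* Let $n\ge1$ and let $T\in\mathcal{L}(\mathcal{H})$ be $n$-EP. Then $T^{2n}\ge 0$ if and only if $T^{2n-1}\omega(T)\ge0$.
   Context: $\mathcal{H}$ is a Hilbert space, $\mathcal{L}(\mathcal{H})$ the bounded operators on it; for $A\in\mathcal{L}(\mathcal{H})$, $A\ge0$ means $A$ is a positive operator ($\langle Ax,x\rangle\ge0$ for all $x$). For $T$ with closed range, $T^\dagger$ is its Moore–Penrose inverse (unique solution of $TT^\dagger T=T$, $T^\dagger TT^\dagger=T^\dagger$, $(T^\dagger T)^*=T^\dagger T$, $(TT^\dagger)^*=TT^\dagger$) and $\omega(T)=T(T^*T)^\dagger=(T^\dagger)^*$ is its Cauchy dual. $T$ is $n$-EP if it has closed range and $T^nT^\dagger=T^\dagger T^n$. *)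

(* Defs.v *)
From HB Require Import structures.
From mathcomp Require Import all_boot all_order all_algebra.
From mathcomp Require Import complex.
From mathcomp Require Import reals.
Set Implicit Arguments. Unset Strict Implicit. Unset Printing Implicit Defensive.
Import Order.TTheory GRing.Theory Num.Theory.
Local Open Scope ring_scope.

Section Hilbert.
Variables (R : realType) (V : lmodType R[i]) (ip : V -> V -> R[i]).

Definition hnorm (x : V) : R := Num.sqrt (complex.Re (ip x x)).

Definition hcauchy (u : nat -> V) : Prop :=
  forall e : R, 0 < e -> exists N : nat, forall m k : nat,
    (N <= m)%N -> (N <= k)%N -> hnorm (u m - u k) < e.

Definition hconverges (u : nat -> V) (l : V) : Prop :=
  forall e : R, 0 < e -> exists N : nat, forall m : nat,
    (N <= m)%N -> hnorm (u m - l) < e.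

(* ip is an inner product (linear in the first variable) making V a
   complex Hilbert space *)
Definition is_hilbert : Prop :=
  [/\ (forall (a : R[i]) (x y z : V), ip (a *: x + y) z = a * ip x z + ip y z),
      (forall x y : V, ip y x = (ip x y)^*),
      (forall x : V, 0 <= ip x x),
      (forall x : V, ip x x = 0 -> x = 0)
    & (forall u : nat -> V, hcauchy u -> exists l, hconverges u l)].

Definition bounded_op (T : V -> V) : Prop :=
  (forall (a : R[i]) (x y : V), T (a *: x + y) = a *: T x + T y) /\
  exists M : R, forall x : V, hnorm (T x) <= M * hnorm x.

Definition is_adjoint (A B : V -> V) : Prop :=
  forall x y : V, ip (A x) y = ip x (B y).

Definition positive_op (A : V -> V) : Prop :=
  forall x : V, 0 <= ip (A x) x.

Definition closed_range (T : V -> V) : Prop :=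
  forall (u : nat -> V) (y : V), (forall k, exists x, u k = T x) ->
    hconverges u y -> exists x, y = T x.

(* S is the Moore-Penrose inverse of T (it is unique when it exists) *)
Definition is_MP_inverse (T S : V -> V) : Prop :=
  [/\ bounded_op S,
      (forall x, T (S (T x)) = T x),
      (forall x, S (T (S x)) = S x),
      is_adjoint (S \o T) (S \o T)
    & is_adjoint (T \o S) (T \o S)].

Definition n_EP (n : nat) (T : V -> V) : Prop :=
  closed_range T /\
  exists S, is_MP_inverse T S /\ forall x, iter n T (S x) = S (iter n T x).

(* W = omega(T) = (T^dagger)^* is the Cauchy dual of T *)
Definition is_cauchy_dual (T W : V -> V) : Prop :=
  exists S, is_MP_inverse T S /\ is_adjoint S W.

End Hilbert.

(* Main.v *)
Require Import Defs.
From HB Require Import structures.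
From mathcomp Require Import all_boot all_order all_algebra.
From mathcomp Require Import complex.
From mathcomp Require Import reals.
From mathcomp Require Import ring lra.
Import Order.TTheory GRing.Theory Num.Theory.
Local Open Scope ring_scope.
Local Open Scope complex_scope.
Set Implicit Arguments. Unset Strict Implicit. Unset Printing Implicit Defensive.

Section IP.
Variables (R : realType) (V : lmodType R[i]) (ip : V -> V -> R[i]).
Hypothesis hH : is_hilbert ip.

Let hlin : forall (a : R[i]) (x y z : V), ip (a *: x + y) z = a * ip x z + ip y z.
Proof. by case: hH. Qed.
Let hsym : forall x y : V, ip y x = Num.conj (ip x y).
Proof. by case: hH. Qed.
Let hpos : forall x : V, 0 <= ip x x.
Proof. by case: hH. Qed.
Let hdef : forall x : V, ip x x = 0 -> x = 0.
Proof. by case: hH. Qed.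

Lemma ip0l z : ip 0 z = 0.
Proof.
have := hlin 1 0 0 z; rewrite scaler0 addr0 mul1r => h.
by apply: (addrI (ip 0 z)); rewrite addr0 -h.
Qed.
Lemma ipDl x y z : ip (x + y) z = ip x z + ip y z.
Proof. by rewrite -[x]scale1r hlin mul1r scale1r. Qed.
Lemma ipZl a x z : ip (a *: x) z = a * ip x z.
Proof. by rewrite -[a *: x]addr0 hlin ip0l addr0. Qed.
Lemma ipNl x z : ip (- x) z = - ip x z.
Proof. by rewrite -scaleN1r ipZl mulN1r. Qed.
Lemma ipBl x y z : ip (x - y) z = ip x z - ip y z.
Proof. by rewrite ipDl ipNl. Qed.
Lemma ipDr x y z : ip z (x + y) = ip z x + ip z y.
Proof. by rewrite (hsym (x + y)) ipDl rmorphD (hsym x z) (hsym y z). Qed.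
Lemma ipZr a x z : ip z (a *: x) = Num.conj a * ip z x.
Proof. by rewrite (hsym (a *: x)) ipZl rmorphM (hsym x z). Qed.
Lemma ipNr x z : ip z (- x) = - ip z x.
Proof. by rewrite (hsym (- x)) ipNl rmorphN (hsym x z). Qed.
Lemma ipBr x y z : ip z (x - y) = ip z x - ip z y.
Proof. by rewrite ipDr ipNr. Qed.
Lemma ip0r z : ip z 0 = 0.
Proof. by rewrite (hsym 0) ip0l rmorph0. Qed.

Lemma ext2 u v : (forall z, ip z u = ip z v) -> u = v.
Proof.
move=> h; apply/eqP; rewrite -subr_eq0; apply/eqP; apply: hdef.
by rewrite ipBr h subrr.
Qed.

Definition q x := complex.Re (ip x x).
Definition rp x y := complex.Re (ip x y).

Lemma q_ge0 x : 0 <= q x.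
Proof. by have := hpos x; rewrite /q lecE /= => /andP[]. Qed.
Lemma ipxx x : ip x x = (q x)%:C.
Proof.
have := hpos x; rewrite /q lecE; case: (ip x x) => a b /= /andP[/eqP -> _].
by [].
Qed.
Lemma q0 x : q x = 0 -> x = 0.
Proof. by move=> h; apply: hdef; rewrite ipxx h. Qed.

Lemma ReJ (z : R[i]) : complex.Re (Num.conj z) = complex.Re z.
Proof. by case: z. Qed.

Lemma qB x y : q (x - y) = q x - 2 * rp x y + q y.
Proof.
rewrite /q /rp ipBl !ipBr (hsym x y).
case: (ip x y) => a b; case: (ip x x) => c d; case: (ip y y) => e f /=.
lra.
Qed.
Lemma rpZl (t : R) x y : rp (t%:C *: x) y = t * rp x y.
Proof. by rewrite /rp ipZl; case: (ip x y) => a b /=; lra. Qed.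
Lemma rpZr (t : R) x y : rp x (t%:C *: y) = t * rp x y.
Proof. by rewrite /rp ipZr; case: (ip x y) => a b /=; lra. Qed.
Lemma qZ (t : R) x : q (t%:C *: x) = t ^+ 2 * q x.
Proof. by rewrite /q ipZl ipZr; case: (ip x x) => a b /=; rewrite expr2; lra. Qed.
Lemma qN x : q (- x) = q x.
Proof. by rewrite /q ipNl ipNr opprK. Qed.
Lemma rpNr x y : rp x (- y) = - rp x y.
Proof. by rewrite /rp ipNr; case: (ip x y). Qed.
Lemma qi x : q ('i%C *: x) = q x.
Proof. by rewrite /q ipZl ipZr; case: (ip x x) => a b /=; lra. Qed.
Lemma rpi x y : rp x ('i%C *: y) = complex.Im (ip x y).
Proof. by rewrite /rp ipZr; case: (ip x y) => a b /=; lra. Qed.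

Lemma rp_le x y (t : R) : 0 < t -> 2 * rp x y <= t * q x + q y / t.
Proof.
move=> t0; have := q_ge0 (t%:C *: x - y).
rewrite qB qZ rpZl => h.
have -> : t * q x + q y / t = (t ^+ 2 * q x + q y) / t.
  have tn0 : t != 0 by rewrite gt_eqF.
  by field.
rewrite ler_pdivlMr //; nra.
Qed.

Lemma rp_abs x y (t : R) : 0 < t -> 2 * `|rp x y| <= t * q x + q y / t.
Proof.
move=> t0; have h1 := rp_le x y t0; have h2 := rp_le x (- y) t0.
rewrite rpNr qN in h2.
case: (lerP 0 (rp x y)) => h; [rewrite ger0_norm // | rewrite ltr0_norm //]; lra.
Qed.
Lemma im_abs x y (t : R) : 0 < t -> 2 * `|complex.Im (ip x y)| <= t * q x + q y / t.
Proof. by move=> t0; rewrite -rpi -(qi y); apply: rp_abs. Qed.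

End IP.

Section Ops.
Variables (R : realType) (V : lmodType R[i]) (ip : V -> V -> R[i]).
Hypothesis hH : is_hilbert ip.
Local Notation q := (q ip).
Local Notation rp := (rp ip).

Definition linf (f : V -> V) := forall (a : R[i]) x y, f (a *: x + y) = a *: f x + f y.

Lemma lin0 f : linf f -> f 0 = 0.
Proof.
move=> h; have := h 1 0 0; rewrite scaler0 addr0 scale1r => e.
by apply: (addrI (f 0)); rewrite addr0 -e.
Qed.
Lemma linD f : linf f -> forall x y, f (x + y) = f x + f y.
Proof. by move=> h x y; have := h 1 x y; rewrite !scale1r. Qed.
Lemma linZ f : linf f -> forall a x, f (a *: x) = a *: f x.
Proof. by move=> h a x; have := h a x 0; rewrite !addr0 lin0 // addr0. Qed.
Lemma linN f : linf f -> forall x, f (- x) = - f x.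
Proof. by move=> h x; rewrite -scaleN1r linZ // scaleN1r. Qed.
Lemma linB f : linf f -> forall x y, f (x - y) = f x - f y.
Proof. by move=> h x y; rewrite linD // linN. Qed.
Lemma lin_iter f k : linf f -> linf (iter k f).
Proof.
move=> h; elim: k => [|k IH] a x y //=.
by rewrite IH; apply: h.
Qed.

Definition qbound (f : V -> V) (K : R) := forall x, q (f x) <= K * q x.

Lemma bounded_qbound f : bounded_op ip f -> exists K, 1 <= K /\ qbound f K.
Proof.
case=> _ [M hM]; exists (M ^+ 2 + 1); split.
  by rewrite lerDr sqr_ge0.
move=> x; have h : Num.sqrt (q (f x)) <= M * Num.sqrt (q x) by exact: hM x.
have q1 := q_ge0 hH (f x); have q2 := q_ge0 hH x.
have s1 := sqrtr_ge0 (q (f x)).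
have e1 := sqr_sqrtr q1; have e2 := sqr_sqrtr q2.
set a := Num.sqrt (q (f x)) in h s1 e1 *; set b := Num.sqrt (q x) in h e2 *.
rewrite -e1 -e2.
have hb : 0 <= b by apply: sqrtr_ge0.
have : a ^+ 2 <= (M * b) ^+ 2 by rewrite !expr2; nra.
rewrite exprMn => h2; rewrite mulrDl mul1r; nra.
Qed.

Lemma qbound_iter f K k : 1 <= K -> qbound f K -> qbound (iter k f) (K ^+ k).
Proof.
move=> K1 h; elim: k => [|k IH] x /=; first by rewrite expr0 mul1r.
apply: (le_trans (h _)); rewrite exprS -mulrA; apply: ler_wpM2l.
  by apply: le_trans K1.
exact: IH.
Qed.

End Ops.

Section Main.
Variables (R : realType) (V : lmodType R[i]) (ip : V -> V -> R[i]).
Hypothesis hH : is_hilbert ip.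
Local Notation q := (q ip).
Local Notation rp := (rp ip).
Variables (T S W : V -> V) (KT KS : R).
Hypotheses (hT : linf T) (hS : linf S) (KT1 : 1 <= KT) (KS1 : 1 <= KS)
  (bT : qbound ip T KT) (bS : qbound ip S KS)
  (hTST : forall x, T (S (T x)) = T x) (hSTS : forall x, S (T (S x)) = S x)
  (hP : forall a b, ip (T (S a)) b = ip a (T (S b)))
  (hW : forall a b, ip (S a) b = ip a (W b)).

Lemma Wlin : linf W.
Proof.
move=> a x y; apply: (ext2 hH) => z.
by rewrite -hW ipDr // ipZr // ipDr // ipZr // -!hW.
Qed.

Lemma TSW y : T (S (W y)) = W y.
Proof.
apply: (ext2 hH) => z.
by rewrite -hP -hW hSTS hW.
Qed.

Lemma Wbound z : q (W z) <= KS * q z.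
Proof.
have K0 : 0 < KS by apply: lt_le_trans KS1.
have e : q (W z) = rp (S (W z)) z by rewrite /rp hW.
have Ki : 0 < KS^-1 by rewrite invr_gt0.
have h := rp_le hH (S (W z)) z Ki.
rewrite -e invrK in h.
have h2 : KS^-1 * q (S (W z)) <= q (W z).
  rewrite -(ler_pM2l K0) mulrA divff ?gt_eqF // mul1r; exact: bS.
rewrite mulrC; lra.
Qed.

Lemma TSlin : linf (fun x => T (S x)).
Proof. by move=> a x y; rewrite hS hT. Qed.

Definition gam := (KS * KT)^-1.

Lemma gam_gt0 : 0 < gam.
Proof. rewrite invr_gt0 mulr_gt0 //; [exact: lt_le_trans KS1 | exact: lt_le_trans KT1]. Qed.

Lemma step r : T (S r) = r ->
  let r' := r - (KS^-1)%:C *: W (S r) in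
  T (S r') = r' /\ q r' <= q r - gam * q r.
Proof.
move=> Pr r'; split.
  by rewrite /r' (linB TSlin) Pr (linZ TSlin) TSW.
have K0 : 0 < KS by apply: lt_le_trans KS1.
have KT0 : 0 < KT by apply: lt_le_trans KT1.
rewrite /r' (qB hH) (qZ hH) (rpZr hH).
set s := q (S r).
have h1 : rp r (W (S r)) = s by rewrite /rp -hW.
have h2 : KS^-1 ^+ 2 * q (W (S r)) <= KS^-1 * s.
  rewrite expr2 -mulrA; apply: ler_wpM2l; first by rewrite invr_ge0 ltW.
  rewrite -(ler_pM2l K0) mulrA divff ?gt_eqF // mul1r; exact: Wbound.
have h3 : gam * q r <= KS^-1 * s.
  have : q r <= KT * s by rewrite -{1}Pr; exact: bT.
  rewrite /gam invfM -mulrA => h; apply: ler_wpM2l; first by rewrite invr_ge0 ltW.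
  by rewrite ler_pdivrMl.
rewrite h1; lra.
Qed.


Lemma reach u (d : R) : T (S u) = u -> 0 < d -> exists y, q (u - W y) <= d.
Proof.
move=> Pu d0.
have g0 := gam_gt0.
have main : forall k : nat, exists y : V, T (S (u - W y)) = u - W y /\
   (q (u - W y) <= d \/ q (u - W y) <= q u - k%:R * (gam * d)).
  elim=> [|k [y [Py hy]]].
    exists 0; rewrite (lin0 Wlin) subr0; split => //; right; lra.
  case: (lerP (q (u - W y)) d) => hd.
    by exists y; split => //; left.
  case: hy => hy; first by exfalso; move: hy; rewrite leNgt hd.
  have [Pr' hr'] := step Py.
  exists (y + (KS^-1)%:C *: S (u - W y)).
  have -> : u - W (y + (KS^-1)%:C *: S (u - W y)) =
       (u - W y) - (KS^-1)%:C *: W (S (u - W y)).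
    by rewrite (linD Wlin) (linZ Wlin) opprD addrA.
  split => //; right.
  have : gam * d <= gam * q (u - W y) by apply: ler_wpM2l; [exact: ltW | exact: ltW].
  rewrite -natr1 mulrDl mul1r; lra.
have qu0 := q_ge0 hH u.
have gd : 0 < gam * d by rewrite mulr_gt0.
have := archi_boundP (divr_ge0 qu0 (ltW gd)).
set k := Num.Def.archi_bound _ => hk.
have [y [_ [hy|hy]]] := main k; first by exists y.
exfalso; have := q_ge0 hH (u - W y).
rewrite ltr_pdivrMr // in hk; lra.
Qed.

End Main.

Section Final.
Variables (R : realType) (V : lmodType R[i]) (ip : V -> V -> R[i]).
Hypothesis hH : is_hilbert ip.
Local Notation q := (q ip).
Local Notation rp := (rp ip).
Variables (T S W : V -> V) (KT KS : R) (n : nat).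
Hypotheses (hT : linf T) (hS : linf S) (KT1 : 1 <= KT) (KS1 : 1 <= KS)
  (bT : qbound ip T KT) (bS : qbound ip S KS)
  (hTST : forall x, T (S (T x)) = T x) (hSTS : forall x, S (T (S x)) = S x)
  (hP : forall a b, ip (T (S a)) b = ip a (T (S b)))
  (hW : forall a b, ip (S a) b = ip a (W b))
  (hn : (1 <= n)%N) (hcomm : forall x, iter n T (S x) = S (iter n T x)).

Local Notation A := (iter (2 * n) T).

Lemma e2n : (2 * n = (2 * n - 1).+1)%N.
Proof. by rewrite subn1 prednK // muln_gt0. Qed.

Lemma TnP x : iter n T (T (S x)) = iter n T x.
Proof.
rewrite -iterSr iterS hcomm.
case: n hn => // m _; by rewrite iterS hTST.
Qed.

Lemma A_P x : A (T (S x)) = A x.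
Proof. by rewrite mul2n -addnn !iterD TnP. Qed.

Lemma P_A x : T (S (A x)) = A x.
Proof. by rewrite e2n iterS hTST. Qed.

Lemma SA x : A (S x) = S (A x).
Proof. by rewrite mul2n -addnn !iterD !hcomm. Qed.

Lemma B_eq y : iter (2 * n - 1) T (W y) = S (A (W y)).
Proof.
by rewrite -(TSW hH hSTS hP hW) -iterSr -e2n SA (TSW hH hSTS hP hW).
Qed.

Lemma idB y : ip (iter (2 * n - 1) T (W y)) y = ip (A (W y)) (W y).
Proof. by rewrite B_eq hW. Qed.

Lemma idA x : ip (A x) x = ip (A (T (S x))) (T (S x)).
Proof. by rewrite -{1}(A_P x) -{1}(P_A (T (S x))) hP. Qed.


Lemma small0 (v : R) : (forall e : R, 0 < e -> `|v| <= e) -> v = 0.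
Proof.
move=> h; apply/eqP; apply/negPn/negP => nv.
have p : 0 < `|v| by rewrite normr_gt0.
have := h (`|v| / 2%:R) (divr_gt0 p (ltr0Sn _ 1)); lra.
Qed.

Lemma smallge (v : R) : (forall e : R, 0 < e -> - e <= v) -> 0 <= v.
Proof.
move=> h; case: (lerP 0 v) => // vn.
have vp : 0 < - v by rewrite oppr_gt0.
have := h (- v / 2%:R) (divr_gt0 vp (ltr0Sn _ 1)); lra.
Qed.

Lemma ReE4 (a b c d : R[i]) :
  complex.Re (a + b + c - d) = complex.Re a + complex.Re b + complex.Re c - complex.Re d.
Proof. by case: a => ? ?; case: b => ? ?; case: c => ? ?; case: d => ? ?. Qed.
Lemma ImE4 (a b c d : R[i]) :
  complex.Im (a + b + c - d) = complex.Im a + complex.Im b + complex.Im c - complex.Im d.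
Proof. by case: a => ? ?; case: b => ? ?; case: c => ? ?; case: d => ? ?. Qed.

Lemma equiv_pos : positive_op ip A <->
   positive_op ip (fun x => iter (2 * n - 1) T (W x)).
Proof.
split.
  by move=> hA y /=; rewrite idB; apply: hA.
move=> hB x; rewrite idA.
set u := T (S x).
have Pu : T (S u) = u by rewrite /u hTST.
have hX : forall y, 0 <= ip (A (W y)) (W y) by move=> y; rewrite -idB; exact: hB y.
have hAl : linf A := lin_iter _ hT.
have bA : qbound ip A (KT ^+ (2 * n)) := qbound_iter _ KT1 bT.
set Ka := KT ^+ (2 * n) in bA.
have Ka1 : 1 <= Ka by apply: exprn_ege1.
set Z := ip (A u) u.
have claim : forall e : R, 0 < e -> `|complex.Im Z| <= e /\ - e <= complex.Re Z.
  move=> e e0.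
  have qAu := q_ge0 hH (A u); have qu := q_ge0 hH u.
  set C := q (A u) + q u + 3%:R.
  have C0 : 0 < C by rewrite /C; lra.
  set eps := Num.min 1 (e / C).
  have eps0 : 0 < eps by rewrite lt_min ltr01 divr_gt0.
  have eps1 : eps <= 1 by rewrite ge_min lexx.
  have epsC : eps * C <= e.
    by rewrite -ler_pdivlMr // ge_min lexx orbT.
  set d := eps ^+ 2 / (1 + Ka).
  have Ka0 : 0 < 1 + Ka by lra.
  have d0 : 0 < d by rewrite divr_gt0 // exprn_gt0.
  have [y hy] := reach hH hT hS KT1 KS1 bT bS hSTS hP hW Pu d0.
  have [r Wy {}hy] : exists2 r, W y = u - r & q r <= d.
    by exists (u - W y) => //; rewrite opprB addrC subrK.
  have X := hX y; rewrite Wy (linB hAl) (ipBl hH) !(ipBr hH) in X.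
  set X' := _ - _ in X.
  have ZE : Z = X' + ip (A u) r + ip (A r) u - ip (A r) r.
    by rewrite /X' /Z; ring.
  have qr := q_ge0 hH r; have qar := q_ge0 hH (A r).
  have hqar : q (A r) <= Ka * q r := bA r.
  have hq : q (A r) + q r <= eps ^+ 2.
    have : q r * (1 + Ka) <= eps ^+ 2 by rewrite -ler_pdivlMr.
    lra.
  have eq1 : q r / eps <= eps.
    by rewrite ler_pdivrMr // -expr2; lra.
  have eq2 : eps^-1 * q (A r) <= eps.
    by rewrite mulrC ler_pdivrMr // -expr2; lra.
  have eq3 : eps ^+ 2 <= eps.
    by rewrite expr2; nra.
  have eq4 : q u / eps^-1 = q u * eps by rewrite invrK.
  have eq5 : eps * C = eps * q (A u) + q u * eps + 3%:R * eps.
    by rewrite /C; ring.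
  have r1 := rp_abs hH (A u) r eps0.
  have ei0 : 0 < eps^-1 by rewrite invr_gt0.
  have r2 := rp_abs hH (A r) u ei0.
  have r3 := rp_abs hH (A r) r ltr01.
  have i1 := im_abs hH (A u) r eps0.
  have i2 := im_abs hH (A r) u ei0.
  have i3 := im_abs hH (A r) r ltr01.
  rewrite /rp eq4 mul1r divr1 in r1 r2 r3.
  rewrite eq4 mul1r divr1 in i1 i2 i3.
  move: X; rewrite lecE /= => /andP[/eqP X1 X2].
  have n1 := ler_norm (complex.Re (ip (A u) r)).
  have n1' := ler_norm (- complex.Re (ip (A u) r)); rewrite normrN in n1'.
  have n2 := ler_norm (complex.Re (ip (A r) u)).
  have n2' := ler_norm (- complex.Re (ip (A r) u)); rewrite normrN in n2'.
  have n3 := ler_norm (complex.Re (ip (A r) r)).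
  have n3' := ler_norm (- complex.Re (ip (A r) r)); rewrite normrN in n3'.
  have m1 := ler_norm (complex.Im (ip (A u) r)).
  have m1' := ler_norm (- complex.Im (ip (A u) r)); rewrite normrN in m1'.
  have m2 := ler_norm (complex.Im (ip (A r) u)).
  have m2' := ler_norm (- complex.Im (ip (A r) u)); rewrite normrN in m2'.
  have m3 := ler_norm (complex.Im (ip (A r) r)).
  have m3' := ler_norm (- complex.Im (ip (A r) r)); rewrite normrN in m3'.
  have ReZ : complex.Re Z = complex.Re X' + complex.Re (ip (A u) r)
     + complex.Re (ip (A r) u) - complex.Re (ip (A r) r).
    by rewrite ZE ReE4.
  have ImZ : complex.Im Z = complex.Im X' + complex.Im (ip (A u) r)
     + complex.Im (ip (A r) u) - complex.Im (ip (A r) r).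
    by rewrite ZE ImE4.
  split; last by rewrite ReZ; lra.
  rewrite ler_norml ImZ; apply/andP; split; lra.
have hIm : complex.Im Z = 0.
  by apply: small0 => e e0; case: (claim e e0).
have hRe : 0 <= complex.Re Z.
  by apply: smallge => e e0; case: (claim e e0).
by rewrite lecE /= hIm eqxx hRe.
Qed.

End Final.

Section Uniq.
Variables (R : realType) (V : lmodType R[i]) (ip : V -> V -> R[i]).
Hypothesis hH : is_hilbert ip.

Lemma adjL (E F : V -> V) : (forall a b, ip (E a) b = ip a (E b)) ->
  (forall a b, ip (F a) b = ip a (F b)) ->
  (forall x, E (F x) = E x) -> forall y, F (E y) = E y.
Proof.
move=> hE hF h y; apply: (ext2 hH) => z.
by rewrite -hF -hE h hE.
Qed.

Lemma adjL' (E F : V -> V) : (forall a b, ip (E a) b = ip a (E b)) ->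
  (forall a b, ip (F a) b = ip a (F b)) ->
  (forall x, E (F x) = F x) -> forall y, F (E y) = F y.
Proof.
move=> hE hF h y; apply: (ext2 hH) => z.
by rewrite -hF -hE h hF.
Qed.

Lemma MP_unique T S1 S2 : is_MP_inverse ip T S1 -> is_MP_inverse ip T S2 ->
  forall x, S1 x = S2 x.
Proof.
case=> _ h1 h2 h3 h4; case=> _ k1 k2 k3 k4.
have P1 : forall a b, ip (T (S1 a)) b = ip a (T (S1 b)) by move=> a b; exact: h4.
have P2 : forall a b, ip (T (S2 a)) b = ip a (T (S2 b)) by move=> a b; exact: k4.
have Q1 : forall a b, ip (S1 (T a)) b = ip a (S1 (T b)) by move=> a b; exact: h3.
have Q2 : forall a b, ip (S2 (T a)) b = ip a (S2 (T b)) by move=> a b; exact: k3.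
have eP : forall y, T (S1 y) = T (S2 y).
  move=> y.
  have := adjL' P2 P1 (fun x => k1 (S1 x)) y.
  by rewrite h1 => ->.
have eQ : forall y, S1 (T y) = S2 (T y).
  move=> y.
  have := adjL Q1 Q2 (fun x => congr1 S1 (k1 x)) y.
  by rewrite h1 => ->.
move=> x.
by rewrite -h2 eQ eP k2.
Qed.

End Uniq.

Local Close Scope complex_scope.

Theorem mainTheorem11 (R : realType) (V : lmodType R[i]) (ip : V -> V -> R[i])
  (n : nat) (T W : V -> V) :
  is_hilbert ip -> (1 <= n)%N -> bounded_op ip T -> n_EP ip n T ->
  is_cauchy_dual ip T W ->
  (positive_op ip (iter (2 * n) T) <->
   positive_op ip (fun x => iter (2 * n - 1) T (W x))).
Proof.
move=> hH hn hTb [_ [S1 [hMP1 hcomm]]] [S [hMP hW]].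
have eS := MP_unique hH hMP1 hMP.
have [KT [KT1 bT]] := bounded_qbound hH hTb.
have hSb : bounded_op ip S by case: hMP.
have [KS [KS1 bS]] := bounded_qbound hH hSb.
have hT : linf T by case: hTb.
have hS : linf S by case: hSb.
case: hMP => _ h1 h2 h3 h4.
apply: (equiv_pos hH hT hS KT1 KS1 bT bS h1 h2 _ hW hn).
  by move=> a b; exact: h4.
by move=> x; rewrite -!eS.
Qed.
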